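(* Let $q=3^k$. Then, as $n\to\infty$, $$EGZ(3,\mathbb{F}_{q}^{n},2) \leq \begin{cases} 8.315^{n+o(n)} & \text{for } k=2, \\ 21.802^{n+o(n)} &\text{for } k=3, \\ 58.557^{n+o(n)} &\text{for } k=4, \\ 159.812^{n+o(n)} &\text{for } k=5. \end{cases}$$
   Context: $\mathbb{F}_q^n$ is viewed as a commutative ring with coordinatewise operations. For elements $g_1,\dots,g_t$ of a commutative ring $R$, $e_m(g_1,\dots,g_t)=\sum_{1\leq i_1<\cdots<i_m\leq t}\prod_{j=1}^m g_{i_j}$; in particular $e_2(g_1,g_2,g_3)=g_1g_2+g_2g_3+g_3g_1$. A sequence over $R$ is a finite list of elements of $R$ (repetitions allowed); a subsequence of length $t$ is obtained by choosing $t$ distinct positions. For a finite commutative ring $R$, $EGZ(t,R,m)$ is the smallest positive integer $\ell$ such that every sequence $S$ over $R$ of length $|S|\geq \ell$ contains a subsequence $S'$ of length $t$ with $e_m(S')=0$ in $R$; if no such $\ell$ exists, $EGZ(t,R,m)=\infty$. *)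

(* Defs.v *)
From Stdlib Require Import Reals.
From HB Require Import structures.
From mathcomp Require Import all_boot all_order all_algebra all_field.
Set Implicit Arguments. Unset Strict Implicit. Unset Printing Implicit Defensive.
Import GRing.Theory.

Local Open Scope ring_scope.

Definition elem_sym (R : pzSemiRingType) (t m : nat) (g : 'I_t -> R) : R :=
  \sum_(A : {set 'I_t} | #|A| == m) \prod_(i in A) g i.

Definition coordring (F : pzRingType) (n : nat) : pzRingType := {ffun 'I_n -> F}.

Definition egz_prop (R : pzSemiRingType) (t m l : nat) : Prop :=
  forall S : seq R, (l <= size S)%N ->
    exists pos : 'I_t -> 'I_(size S), injective pos /\
      elem_sym m (fun i => nth 0 S (pos i)) = 0.

(* EGZ(t,R,m) <= x  (x real): the least positive l with egz_prop exists and is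
   at most x; equivalently some positive l <= x has egz_prop. *)
Definition EGZ_le (R : pzSemiRingType) (t m : nat) (x : Rdefinitions.R) : Prop :=
  exists l : nat, (0 < l)%N /\ Rle (INR l) x /\ egz_prop R t m l.

Local Close Scope ring_scope.
Local Open Scope R_scope.

Definition egz_const (k : nat) : Rdefinitions.R :=
  match k with
  | 2 => 8.315 | 3 => 21.802 | 4 => 58.557 | 5 => 159.812 | _ => 0
  end.

(* Main.v *)
Require Import Defs.
From Stdlib Require Import Reals.
From HB Require Import structures.
From mathcomp Require Import all_boot all_order all_algebra all_field.
From mathcomp Require Import ring zify.
Set Implicit Arguments. Unset Strict Implicit. Unset Printing Implicit Defensive.
Import GRing.Theory.

Module Part1.
Local Open Scope ring_scope.

Section Slice.
Variable K : fieldType.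

Lemma big_support_vec m p (B : 'M[K]_(p, m)) :
  exists h : 'rV[K]_m, (h <= B)%MS /\ exists J : {set 'I_m},
    (\rank B <= #|J|)%N /\ (forall j, j \in J -> h 0 j = 1).
Proof.
set f := maxrankfun (B^T).
have fr := maxrowsub_free (B^T).
set S := rowsub f B^T in fr.
have fullS : row_full S^T.
  by rewrite /row_full mxrank_tr; move: fr; rewrite /row_free => /eqP ->.
have := submx_full (const_mx 1 : 'rV[K]_(\rank B^T)) fullS.
case/submxP => u Hu.
exists (u *m B); split; first exact: submxMl.
exists (f @: setT); split.
  by rewrite card_imset ?cardsT ?card_ord ?mxrank_tr //; apply: maxrankfun_inj.
move=> j /imsetP [i _ ->].
have := congr1 (fun M : 'rV[K]_(\rank B^T) => M 0 i) Hu; rewrite !mxE => ->.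
by apply: eq_bigr => a _; rewrite !mxE.
Qed.

Lemma slice_rank (T I : finType) (A : {set T}) (L1 L2 L3 : {set I})
  (f1 f2 f3 : I -> T -> K) (g1 g2 g3 : I -> T -> T -> K) :
  (forall x y z, x \in A -> y \in A -> z \in A ->
     (if (x == y) && (y == z) then 1 else 0) =
     \sum_(i in L1) f1 i x * g1 i y z + \sum_(i in L2) f2 i y * g2 i x z
     + \sum_(i in L3) f3 i z * g3 i x y) ->
  (#|A| <= #|L1| + #|L2| + #|L3|)%N.
Proof.
move=> H.
pose e (i : 'I_#|A|) : T := enum_val i.
have eA i : e i \in A by apply: enum_valP.
have einj : injective e by apply: enum_val_inj.
pose C : 'M[K]_(#|A|, #|L3|) := \matrix_(z, i) f3 (enum_val i) (e z).
have [h [hB [J [rJ hJ]]]] := big_support_vec (kermx C).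
have hC : h *m C = 0 by apply/sub_kermxP.
have hC' i : i \in L3 -> \sum_z h 0 z * f3 i (e z) = 0.
  move=> iL; have := congr1 (fun M : 'rV[K]_#|L3| => M 0 (enum_rank_in iL i)) hC.
  rewrite !mxE => E; rewrite -[RHS]E; apply: eq_bigr => z _; rewrite !mxE enum_rankK_in //.
pose N : 'M[K]_#|A| := \matrix_(x, y) \sum_z
   (if (e x == e y) && (e y == e z) then 1 else 0) * h 0 z.
pose P1 : 'M[K]_(#|A|, #|L1|) := \matrix_(x, j) f1 (enum_val j) (e x).
pose Q1 : 'M[K]_(#|L1|, #|A|) := \matrix_(j, y) \sum_z g1 (enum_val j) (e y) (e z) * h 0 z.
pose Q2 : 'M[K]_(#|A|, #|L2|) := \matrix_(x, j) \sum_z g2 (enum_val j) (e x) (e z) * h 0 z.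
pose P2 : 'M[K]_(#|L2|, #|A|) := \matrix_(j, y) f2 (enum_val j) (e y).
have NE : N = P1 *m Q1 + Q2 *m P2.
  apply/matrixP => x y; rewrite !mxE.
  under eq_bigr => z _ do rewrite (H _ _ _ (eA x) (eA y) (eA z)) !mulrDl.
  rewrite !big_split /=.
  have -> : \sum_z (\sum_(i in L3) f3 i (e z) * g3 i (e x) (e y)) * h 0 z = 0.
    under eq_bigr => z _ do rewrite mulr_suml.
    rewrite exchange_big /= big1 // => i iL.
    transitivity (g3 i (e x) (e y) * \sum_z h 0 z * f3 i (e z)); last by rewrite hC' ?mulr0.
    rewrite mulr_sumr; apply: eq_bigr => z _.
    by ring.
  rewrite addr0; congr (_ + _).
    transitivity (\sum_(i in L1) f1 i (e x) * \sum_z g1 i (e y) (e z) * h 0 z).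
      under eq_bigr => z _ do rewrite mulr_suml.
      rewrite exchange_big /=; apply: eq_bigr => i _; rewrite mulr_sumr.
      by apply: eq_bigr => z _; ring.
    by rewrite big_enum_val /=; apply: eq_bigr => j _; rewrite !mxE.
  transitivity (\sum_(i in L2) f2 i (e y) * \sum_z g2 i (e x) (e z) * h 0 z).
    under eq_bigr => z _ do rewrite mulr_suml.
    rewrite exchange_big /=; apply: eq_bigr => i _; rewrite mulr_sumr.
    by apply: eq_bigr => z _; ring.
  rewrite big_enum_val /=; apply: eq_bigr => j _; rewrite !mxE; ring.
have rN : (\rank N <= #|L1| + #|L2|)%N.
  rewrite NE; apply: leq_trans (mxrank_add _ _) _; apply: leq_add.
    by apply: leq_trans (mxrankM_maxl _ _) (rank_leq_col _).
  by apply: leq_trans (mxrankM_maxr _ _) (rank_leq_row _).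
have rJN : (#|J| <= \rank N)%N.
  pose g (a : 'I_#|J|) : 'I_#|A| := enum_val a.
  pose Sel : 'M[K]_(#|J|, #|A|) := \matrix_(a, x) (g a == x)%:R.
  have SE : Sel *m N *m Sel^T = 1%:M.
    apply/matrixP => a b; rewrite !mxE.
    rewrite (bigD1 (g b)) //= big1 => [|x xb]; last first.
      by rewrite !mxE eq_sym (negbTE xb) mulr0.
    rewrite !mxE eqxx mulr1 addr0.
    rewrite (bigD1 (g a)) //= big1 => [|x xa]; last first.
      by rewrite !mxE (eq_sym (g a)) (negbTE xa) mul0r.
    rewrite !mxE eqxx mul1r addr0.
    rewrite (bigD1 (g b)) //= big1 => [|z zb]; last first.
      by rewrite !(inj_eq einj) (eq_sym (g b)) (negbTE zb) andbF mul0r.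
    rewrite !(inj_eq einj) eqxx andbT addr0.
    have [->|ab] := eqVneq a b.
      by rewrite eqxx mul1r; apply: hJ; apply: enum_valP.
    rewrite (inj_eq enum_val_inj) (negbTE ab) mul0r //.
  have := mxrank1 K #|J|; rewrite -SE => <-.
  by apply: leq_trans (mxrankM_maxl _ _) _; apply: mxrankM_maxr.
have : (#|A| - #|L3| <= \rank (kermx C))%N.
  by rewrite mxrank_ker leq_sub2l // rank_leq_col.
move=> h1; have h2 := leq_trans h1 (leq_trans rJ (leq_trans rJN rN)).
have := leq_trans h1 (leq_trans rJ (leq_trans rJN rN)); lia.
Qed.
End Slice.


Lemma big_option (R : nmodType) (T : finType) (f : option T -> R) :
  \sum_(t : option T) f t = f None + \sum_(t : T) f (Some t).
Proof.
rewrite (bigD1 None) //=; congr (_ + _).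
rewrite (reindex_omap Some (fun o => o)) //=; last by case.
by apply: eq_bigl => t; rewrite ?eqxx.
Qed.

Definition pa (p : 'I_6) : nat := nth 0%N [:: 2; 0; 2; 1; 1; 2]%N p.
Definition pb (p : 'I_6) : nat := nth 0%N [:: 2; 2; 0; 2; 1; 1]%N p.
Definition pc (p : 'I_6) : nat := nth 0%N [:: 0; 2; 2; 1; 2; 1]%N p.
Definition pco (F : pzRingType) (p : 'I_6) : F := if (p < 3)%N then 1 else 2%:R.

Lemma pabc p : (pa p + pb p + pc p = 4)%N.
Proof. by case: p => [[|[|[|[|[|[|]]]]]]]. Qed.
Lemma pa_le p : (pa p <= 2)%N. Proof. by case: p => [[|[|[|[|[|[|]]]]]]]. Qed.
Lemma pb_le p : (pb p <= 2)%N. Proof. by case: p => [[|[|[|[|[|[|]]]]]]]. Qed.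
Lemma pc_le p : (pc p <= 2)%N. Proof. by case: p => [[|[|[|[|[|[|]]]]]]]. Qed.

Lemma sq3 (F : comPzRingType) (u v w : F) :
  (u * v + v * w + w * u) ^+ 2 =
  \sum_(p < 6) pco F p * u ^+ pa p * v ^+ pb p * w ^+ pc p.
Proof.
rewrite !big_ord_recl big_ord0 /= /pco /pa /pb /pc /=.
ring.
Qed.

Section Field.
Variables (F : finFieldType) (k : nat).
Hypothesis HF : #|F| = (3 ^ k)%N.

Lemma char3 : (3%:R : F) = 0.
Proof. by have /andP[_ /eqP] := card_finPcharP HF (isT : prime 3). Qed.

Lemma frob3 (x y : F) j : (x + y) ^+ (3 ^ j) = x ^+ (3 ^ j) + y ^+ (3 ^ j).
Proof.
elim: j => [|j IH]; first by rewrite !expr1.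
rewrite expnS !(mulnC 3%N) !exprM IH.
set a := x ^+ _; set b := y ^+ _.
have -> : (a + b) ^+ 3 = a ^+ 3 + b ^+ 3 + 3%:R * (a ^+ 2 * b + a * b ^+ 2) by ring.
by rewrite char3 mul0r addr0.
Qed.

Lemma frobe2 (a b c : F) j :
  (a * b + b * c + c * a) ^+ (3 ^ j) =
  a ^+ (3 ^ j) * b ^+ (3 ^ j) + b ^+ (3 ^ j) * c ^+ (3 ^ j) + c ^+ (3 ^ j) * a ^+ (3 ^ j).
Proof. by rewrite !frob3 !exprMn. Qed.

Lemma pow_qm1 (s : F) : (0 < k)%N ->
  s ^+ (3 ^ k).-1 = if s == 0 then 0 else 1.
Proof.
move=> k0; have q1 : (1 < 3 ^ k)%N by rewrite -{1}(expn0 3) ltn_exp2l.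
have [->|s0] := eqVneq s 0; first by rewrite expr0n; case: (3 ^ k)%N q1 => [|[|]].
apply: (mulIf s0); rewrite mul1r -exprSr prednK ?HF; last by lia.
by rewrite -HF expf_card.
Qed.

Lemma qm1_sum : ((3 ^ k).-1 = \sum_(j < k) 2 * 3 ^ j)%N.
Proof.
elim: k => [|j IH]; first by rewrite big_ord0.
rewrite big_ord_recr /= -IH expnS; have := expn_gt0 3 j; lia.
Qed.

Definition EA (pi : {ffun 'I_k -> 'I_6}) : nat := \sum_(j < k) pa (pi j) * 3 ^ j.
Definition EB (pi : {ffun 'I_k -> 'I_6}) : nat := \sum_(j < k) pb (pi j) * 3 ^ j.
Definition EC (pi : {ffun 'I_k -> 'I_6}) : nat := \sum_(j < k) pc (pi j) * 3 ^ j.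
Definition Cf (pi : {ffun 'I_k -> 'I_6}) : F := \prod_(j < k) pco F (pi j).

Lemma expand_e2 (a b c : F) :
  (a * b + b * c + c * a) ^+ (3 ^ k).-1 =
  \sum_(pi : {ffun 'I_k -> 'I_6}) Cf pi * a ^+ EA pi * b ^+ EB pi * c ^+ EC pi.
Proof.
rewrite qm1_sum -prodrXr.
under eq_bigr => j _ do rewrite mulnC exprM frobe2 sq3.
rewrite bigA_distr_bigA /=; apply: eq_bigr => pi _.
rewrite /Cf /EA /EB /EC -!prodrXr -!big_split /=; apply: eq_bigr => j _.
by rewrite !(mulnC _ (3 ^ j)%N) !exprM.
Qed.
End Field.


Fixpoint ds (k e : nat) : nat := if k is k'.+1 then (e %% 3 + ds k' (e %/ 3))%N else 0%N.

Lemma ds_le k e : (ds k e <= 2 * k)%N.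
Proof.
elim: k e => [|k IH] e //=; have := IH (e %/ 3)%N; have := ltn_pmod e (isT : (0 < 3)%N); lia.
Qed.

Lemma ds_lin k (d : 'I_k -> nat) : (forall j, d j <= 2)%N ->
  ds k (\sum_(j < k) d j * 3 ^ j) = (\sum_(j < k) d j)%N.
Proof.
elim: k d => [|k IH] d dle; first by rewrite !big_ord0.
rewrite !big_ord_recl /=.
have -> : (\sum_(i < k) d (lift ord0 i) * 3 ^ bump 0 i = 3 * \sum_(i < k) d (lift ord0 i) * 3 ^ i)%N.
  rewrite big_distrr /=; apply: eq_bigr => i _; rewrite /bump /= expnS; lia.
have := dle ord0; rewrite expn0 muln1.
set X := (\sum_(i < k) _)%N => h.
rewrite /=.
have -> : ((d ord0 + 3 * X) %% 3 = d ord0)%N by lia.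
have -> : ((d ord0 + 3 * X) %/ 3 = X)%N by lia.
by rewrite /X IH // => j; apply: dle.
Qed.

Lemma sum3split (H : nat -> nat) m :
  (\sum_(0 <= e < 3 * m) H e = \sum_(0 <= e < m) (H (3 * e) + H (3 * e).+1 + H (3 * e).+2))%N.
Proof.
elim: m => [|m IH]; first by rewrite !big_geq.
have -> : (3 * m.+1 = (3 * m).+3)%N by lia.
rewrite !big_nat_recr //= IH; lia.
Qed.

Lemma sum_ds k (u v : nat) :
  (\sum_(0 <= e < 3 ^ k) u ^ ds k e * v ^ (2 * k - ds k e) = (u ^ 2 + u * v + v ^ 2) ^ k)%N.
Proof.
elim: k => [|k IH]; first by rewrite expn0 big_nat1.
rewrite (expnS 3) (expnS (u ^ 2 + u * v + v ^ 2)) sum3split -IH big_distrr /=; apply: eq_bigr => e _.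
have hm t : (t < 3 -> (3 * e + t) %% 3 = t)%N by lia.
have hd t : (t < 3 -> (3 * e + t) %/ 3 = e)%N by lia.
have := ds_le k e; set s := ds k e => hs.
rewrite -[(3 * e)%N]addn0 -!addnS !hm // !hd //.
have -> : (2 * k.+1 - (0 + s) = 2 + (2 * k - s))%N by lia.
have -> : (2 * k.+1 - (1 + s) = 1 + (2 * k - s))%N by lia.
have -> : (2 * k.+1 - (2 + s) = 0 + (2 * k - s))%N by lia.
rewrite !expnD; ring.
Qed.


Lemma ds0 k : ds k 0 = 0%N.
Proof. by elim: k => //= k ->. Qed.

Section Weights.
Variables (k n a b : nat).
Hypothesis ba : (b <= a)%N.

Definition theta : nat := (a ^ (4 * k) * b ^ (2 * k))%N.
Definition rho' (e : nat) : nat := ((a ^ 3) ^ ds k e * (b ^ 3) ^ (2 * k - ds k e))%N.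
Definition rho (e : nat) : nat := if e == 0%N then theta else rho' e.

Lemma rho_ge e : (rho' e <= rho e)%N.
Proof.
rewrite /rho; case: eqP => [->|] //; rewrite /rho' /theta ds0 /= subn0 expn0 mul1n.
rewrite -expnM; have -> : (3 * (2 * k) = 4 * k + 2 * k)%N by lia.
rewrite expnD leq_mul2r; apply/orP; right.
elim: (4 * k)%N => // m IH; rewrite !expnS; exact: leq_mul.
Qed.

Lemma sum_rho :
  (\sum_(0 <= e < 3 ^ k) rho e + b ^ (6 * k) = theta + (a ^ 6 + a ^ 3 * b ^ 3 + b ^ 6) ^ k)%N.
Proof.
have e0 : (0 < 3 ^ k)%N by rewrite expn_gt0.
have := sum_ds k (a ^ 3) (b ^ 3).
rewrite -!expnM /= -/(rho' _).
rewrite (big_ltn e0) (big_ltn e0) /rho eqxx /=.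
have -> : (\sum_(1 <= e < 3 ^ k) (if e == 0%N then theta else rho' e) =
           \sum_(1 <= e < 3 ^ k) rho' e)%N.
  by apply: eq_big_nat => e /andP [] ; case: e.
rewrite /rho' ds0 /= subn0 expn0 mul1n -expnM => <-; rewrite !mulnA.
have -> : (3 * 2 * k = 6 * k)%N by lia.
lia.
Qed.

Definition wt (m : nat) (al : {ffun 'I_m -> 'I_(3 ^ k)}) : nat := (\prod_i rho (al i))%N.
Definition Lset (m : nat) : {set {ffun 'I_m -> 'I_(3 ^ k)}} := [set al | theta ^ m <= wt al]%N.

Lemma card_L : (#|Lset n| * theta ^ n <= (\sum_(0 <= e < 3 ^ k) rho e) ^ n)%N.
Proof.
rewrite -sum1_card big_distrl /=.
apply: (@leq_trans (\sum_(al in Lset n) wt al)%N).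
  by apply: leq_sum => al; rewrite inE mul1n.
apply: (@leq_trans (\sum_(al : {ffun 'I_n -> 'I_(3 ^ k)}) wt al)%N).
  by rewrite [X in (_ <= X)%N](bigID (fun al => al \in Lset n)) /= leq_addr.
have E : (\sum_(al : {ffun 'I_n -> 'I_(3 ^ k)}) wt al =
          \prod_(i < n) \sum_(e < 3 ^ k) rho e)%N by rewrite /wt bigA_distr_bigA.
by rewrite E prod_nat_const card_ord big_mkord.
Qed.

End Weights.


Section Poly.
Variables (F : finFieldType) (k n : nat).
Hypothesis HF : #|F| = (3 ^ k)%N.
Hypothesis k0 : (0 < k)%N.

Local Notation Pi := {ffun 'I_k -> 'I_6}.

Definition eA (t : option Pi) : nat := if t is Some p then EA p else 0%N.
Definition eB (t : option Pi) : nat := if t is Some p then EB p else 0%N.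
Definition eC (t : option Pi) : nat := if t is Some p then EC p else 0%N.
Definition cT (t : option Pi) : F := if t is Some p then - Cf F p else 1.

Lemma E_lt (d : 'I_k -> nat) : (forall j, d j <= 2)%N -> (\sum_(j < k) d j * 3 ^ j < 3 ^ k)%N.
Proof.
move=> dle; apply: (@leq_ltn_trans (\sum_(j < k) 2 * 3 ^ j)%N).
  by apply: leq_sum => j _; rewrite leq_mul2r dle orbT.
rewrite -(qm1_sum HF); have := expn_gt0 3 k; lia.
Qed.

Lemma eA_lt t : (eA t < 3 ^ k)%N.
Proof. by case: t => [p|] /=; [apply: E_lt => j; apply: pa_le | rewrite expn_gt0]. Qed.
Lemma eB_lt t : (eB t < 3 ^ k)%N.
Proof. by case: t => [p|] /=; [apply: E_lt => j; apply: pb_le | rewrite expn_gt0]. Qed.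
Lemma eC_lt t : (eC t < 3 ^ k)%N.
Proof. by case: t => [p|] /=; [apply: E_lt => j; apply: pc_le | rewrite expn_gt0]. Qed.

Lemma Pexp (a b c : F) :
  1 - (a * b + b * c + c * a) ^+ (3 ^ k).-1 =
  \sum_(t : option Pi) cT t * a ^+ eA t * b ^+ eB t * c ^+ eC t.
Proof.
rewrite big_option /= !expr0 !mulr1 (expand_e2 HF) -sumrN; congr (_ + _).
by apply: eq_bigr => p _; rewrite !mulNr.
Qed.

Definition Phi (x y z : {ffun 'I_n -> F}) : F :=
  \prod_(i < n) (1 - (x i * y i + y i * z i + z i * x i) ^+ (3 ^ k).-1).

Lemma PhiE x y z : Phi x y z =
  if [forall i, x i * y i + y i * z i + z i * x i == 0] then 1 else 0.
Proof.
rewrite /Phi; case: forallP => [H|H].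
  by apply: big1 => i _; rewrite (pow_qm1 HF) // H subr0.
have [i Hi] : exists i, ~~ (x i * y i + y i * z i + z i * x i == 0).
  by apply/existsP; rewrite -negb_forall; apply/forallP.
by rewrite (bigD1 i) //= (pow_qm1 HF) // (negbTE Hi) subrr mul0r.
Qed.

Definition aA (s : {ffun 'I_n -> option Pi}) : {ffun 'I_n -> 'I_(3 ^ k)} :=
  [ffun i => Ordinal (eA_lt (s i))].
Definition aB (s : {ffun 'I_n -> option Pi}) : {ffun 'I_n -> 'I_(3 ^ k)} :=
  [ffun i => Ordinal (eB_lt (s i))].
Definition aC (s : {ffun 'I_n -> option Pi}) : {ffun 'I_n -> 'I_(3 ^ k)} :=
  [ffun i => Ordinal (eC_lt (s i))].
Definition mono (al : {ffun 'I_n -> 'I_(3 ^ k)}) (x : {ffun 'I_n -> F}) : F :=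
  \prod_i x i ^+ al i.
Definition Cs (s : {ffun 'I_n -> option Pi}) : F := \prod_i cT (s i).

Lemma PhiExp x y z : Phi x y z =
  \sum_(s : {ffun 'I_n -> option Pi}) Cs s * mono (aA s) x * mono (aB s) y * mono (aC s) z.
Proof.
rewrite /Phi; under eq_bigr => i _ do rewrite Pexp.
rewrite bigA_distr_bigA /=; apply: eq_bigr => s _.
rewrite /Cs /mono -!big_split /=; apply: eq_bigr => i _.
by rewrite !ffunE.
Qed.

End Poly.


Section Slices.
Variables (F : finFieldType) (k n a b : nat).
Hypothesis HF : #|F| = (3 ^ k)%N.
Hypothesis k0 : (0 < k)%N.
Hypothesis ba : (b <= a)%N.

Local Notation Pi := {ffun 'I_k -> 'I_6}.
Local Notation rho := (rho k a b).
Local Notation theta := (theta k a b).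
Local Notation L := (Lset k a b n).

Lemma rho3 (t : option Pi) :
  (theta ^ 3 <= rho (eA t) * rho (eB t) * rho (eC t))%N.
Proof.
case: t => [p|] /=; last by rewrite /rho /= (expnS _ 2) (expnS _ 1) expn1 mulnA.
apply: (@leq_trans (rho' k a b (EA p) * rho' k a b (EB p) * rho' k a b (EC p))%N); last first.
  by rewrite !leq_mul // rho_ge.
rewrite /rho' /EA /EB /EC !ds_lin; try by move=> j; rewrite ?pa_le ?pb_le ?pc_le.
have hs : (\sum_(j < k) pa (p j) + \sum_(j < k) pb (p j) + \sum_(j < k) pc (p j) = 4 * k)%N.
  rewrite -!big_split /= (eq_bigr (fun _ => 4%N)); last by move=> j _; rewrite pabc.
  by rewrite sum_nat_const card_ord mulnC.
have ha : (\sum_(j < k) pa (p j) <= 2 * k)%N.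
  apply: (@leq_trans (\sum_(j < k) 2)%N); first by apply: leq_sum => j _; exact: pa_le.
  by rewrite sum_nat_const card_ord mulnC.
have hb : (\sum_(j < k) pb (p j) <= 2 * k)%N.
  apply: (@leq_trans (\sum_(j < k) 2)%N); first by apply: leq_sum => j _; exact: pb_le.
  by rewrite sum_nat_const card_ord mulnC.
have hc : (\sum_(j < k) pc (p j) <= 2 * k)%N.
  apply: (@leq_trans (\sum_(j < k) 2)%N); first by apply: leq_sum => j _; exact: pc_le.
  by rewrite sum_nat_const card_ord mulnC.
move: hs ha hb hc.
set sa := (\sum_(j < k) pa (p j))%N; set sb := (\sum_(j < k) pb (p j))%N.
set sc := (\sum_(j < k) pc (p j))%N => hs ha hb hc.
have -> : ((a ^ 3) ^ sa * (b ^ 3) ^ (2 * k - sa) * ((a ^ 3) ^ sb * (b ^ 3) ^ (2 * k - sb)) *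
    ((a ^ 3) ^ sc * (b ^ 3) ^ (2 * k - sc)) =
    (a ^ 3) ^ (sa + sb + sc) * (b ^ 3) ^ ((2 * k - sa) + (2 * k - sb) + (2 * k - sc)))%N.
  rewrite !expnD; ring.
rewrite hs /theta -!expnM !expnMn -!expnM.
have -> : (2 * k - sa + (2 * k - sb) + (2 * k - sc) = 2 * k)%N by lia.
by rewrite (mulnC 3%N) (mulnC 3%N (2 * k)%N).
Qed.

Lemma wt3 (s : {ffun 'I_n -> option Pi}) :
  (theta ^ (3 * n) <= wt a b (aA HF k0 s) * wt a b (aB HF k0 s) * wt a b (aC HF k0 s))%N.
Proof.
rewrite /wt -!big_split /= expnM.
have -> : ((theta ^ 3) ^ n = \prod_(i < n) theta ^ 3)%N by rewrite prod_nat_const card_ord.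
by apply: leq_prod => i _; rewrite !ffunE /=; apply: rho3.
Qed.

Lemma light (s : {ffun 'I_n -> option Pi}) :
  aA HF k0 s \notin L -> aB HF k0 s \notin L -> aC HF k0 s \in L.
Proof.
rewrite !inE -!ltnNge => h1 h2; rewrite leqNgt; apply/negP => h3.
move: (wt3 s); rewrite mulnC expnM (expnS _ 2) (expnS _ 1) expn1 -mulnA => h4.
by have := leq_trans (ltn_mul h1 (ltn_mul h2 h3)) h4; rewrite ltnn.
Qed.

Local Notation S := {ffun 'I_n -> option Pi}.
Local Notation AA := (aA HF k0).
Local Notation BB := (aB HF k0).
Local Notation CC := (aC HF k0).
Local Notation T s x y z := (Cs F s * mono (AA s) x * mono (BB s) y * mono (CC s) z).

Definition G1 al (y z : {ffun 'I_n -> F}) : F :=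
  \sum_(s : S | (AA s \in L) && (AA s == al)) Cs F s * mono (BB s) y * mono (CC s) z.
Definition G2 be (x z : {ffun 'I_n -> F}) : F :=
  \sum_(s : S | (AA s \notin L) && (BB s \in L) && (BB s == be)) Cs F s * mono (AA s) x * mono (CC s) z.
Definition G3 ga (x y : {ffun 'I_n -> F}) : F :=
  \sum_(s : S | (AA s \notin L) && (BB s \notin L) && (CC s == ga)) Cs F s * mono (AA s) x * mono (BB s) y.

Lemma PhiSlice x y z : Phi k x y z =
  \sum_(al in L) mono al x * G1 al y z + \sum_(be in L) mono be y * G2 be x z
  + \sum_(ga in L) mono ga z * G3 ga x y.
Proof.
rewrite (PhiExp HF k0) (bigID (fun s => AA s \in L)) /= -addrA; congr (_ + _).
  rewrite (partition_big AA (fun al => al \in L)) //=.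
  apply: eq_bigr => al _; rewrite /G1 mulr_sumr; apply: eq_bigr => s /andP [_ /eqP <-].
  ring.
rewrite (bigID (fun s => BB s \in L)) /=; congr (_ + _).
  rewrite (partition_big BB (fun al => al \in L)) //=; last by move=> s /andP [].
  apply: eq_bigr => al _; rewrite /G2 mulr_sumr; apply: eq_bigr => s /andP [_ /eqP <-].
  ring.
rewrite (partition_big CC (fun al => al \in L)) //=; last first.
  by move=> s /andP [h1 h2]; apply: light.
apply: eq_bigr => al _; rewrite /G3 mulr_sumr; apply: eq_bigr => s /andP [_ /eqP <-].
ring.
Qed.

Lemma class_bound (A : {set {ffun 'I_n -> F}}) :
  (forall x y z, x \in A -> y \in A -> z \in A ->
     Phi k x y z = if (x == y) && (y == z) then 1 else 0) ->
  (#|A| <= 3 * #|L|)%N.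
Proof.
move=> H.
have := @slice_rank F _ _ A L L L (@mono F k n) (@mono F k n) (@mono F k n) G1 G2 G3.
have -> : (3 * #|L| = #|L| + #|L| + #|L|)%N by lia.
apply => x y z xA yA zA; rewrite -H // PhiSlice.
reflexivity.
Qed.
End Slices.


Lemma e2_3 (R : comPzRingType) (u : 'I_3 -> R) :
  \sum_(A : {set 'I_3} | #|A| == 2%N) \prod_(j in A) u j = u 0 * u 1 + u 1 * u 2 + u 2 * u 0.
Proof.
rewrite (reindex_onto (fun j : 'I_3 => ~: [set j]) (fun A => odflt ord0 [pick j in ~: A])); last first.
  move=> B /eqP cA; have h := cardsC B; rewrite card_ord cA in h.
  have : #|~: B| == 1%N by apply/eqP; lia.
  case/cards1P => x hx; case: pickP => [y|]; last by move/(_ x); rewrite hx inE eqxx.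
  by rewrite hx inE => /eqP -> /=; rewrite -hx setCK.
rewrite (eq_bigl (fun _ => true)); last first.
  move=> j; rewrite cardsC1 card_ord eqxx /= setCK.
  case: pickP => [y|]; last by move/(_ j); rewrite inE eqxx.
  by rewrite inE.
rewrite !big_ord_recl big_ord0 /=.
rewrite !(big_mkcond (fun i => i \in _)) !big_ord_recl big_ord0 /= !inE /=.
rewrite !big_ord0.
have e0 : ord0 = 0 :> 'I_3 by apply/val_inj.
have e1 : lift ord0 ord0 = 1 :> 'I_3 by apply/val_inj.
have e2 : lift ord0 (lift ord0 ord0) = 2 :> 'I_3 by apply/val_inj.
rewrite e2 e1 e0; ring.
Qed.

Lemma prod_coord (F : finFieldType) n (I : finType) (P : pred I) (g : I -> coordring F n) i :
  (\prod_(j | P j) g j : coordring F n) i = \prod_(j | P j) (g j : {ffun 'I_n -> F}) i.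
Proof.
elim/big_rec2: _ => [|j x y _ <-]; first by rewrite /GRing.one /= ffunE.
by rewrite /GRing.mul /= ffunE.
Qed.

Lemma e2_coord (F : finFieldType) n (g : 'I_3 -> coordring F n) i :
  (elem_sym 2 g : {ffun 'I_n -> F}) i =
  (g 0 : {ffun 'I_n -> F}) i * (g 1 : {ffun 'I_n -> F}) i
  + (g 1 : {ffun 'I_n -> F}) i * (g 2 : {ffun 'I_n -> F}) i
  + (g 2 : {ffun 'I_n -> F}) i * (g 0 : {ffun 'I_n -> F}) i.
Proof.
rewrite /elem_sym sum_ffunE.
under eq_bigr => A _ do rewrite prod_coord.
exact: (e2_3 (fun j => (g j : {ffun 'I_n -> F}) i)).
Qed.

Section Main.
Variables (F : finFieldType) (k n a b : nat).
Hypothesis HF : #|F| = (3 ^ k)%N.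
Hypothesis k0 : (0 < k)%N.
Hypothesis ba : (b <= a)%N.
Local Notation V := {ffun 'I_n -> F}.
Local Notation L := (Lset k a b n).

Definition supp (v : V) : {set 'I_n} := [set i | v i != 0].
Definition cls (v : V) : 'I_n.+1 := inord #|supp v|.

Lemma supp_lemma (x z : V) : cls x = cls z ->
  (forall i, x i * x i + x i * z i + z i * x i = 0) -> x = z.
Proof.
move=> hc H.
have key i : x i != 0 -> z i = x i.
  move=> xi; have := H i.
  have -> : x i * x i + x i * z i + z i * x i = x i * (x i - z i) + 3%:R * (x i * z i) by ring.
  rewrite (char3 HF) mul0r addr0 => /eqP; rewrite mulf_eq0 (negbTE xi) /= subr_eq0.
  by move/eqP.
have sub : supp x \subset supp z.
  apply/subsetP => i; rewrite !inE => xi; by rewrite key.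
have cx : (#|supp x| < n.+1)%N by rewrite ltnS; apply: leq_trans (max_card _) _; rewrite card_ord.
have cz : (#|supp z| < n.+1)%N by rewrite ltnS; apply: leq_trans (max_card _) _; rewrite card_ord.
have ceq : #|supp x| = #|supp z|.
  by move: (congr1 val hc); rewrite /cls /= !inordK.
have eqs := subset_cardP ceq sub.
apply/ffunP => i; case: (eqVneq (x i) 0) => [xi|xi]; last by rewrite key.
have : i \notin supp x by rewrite inE xi eqxx.
by rewrite eqs inE negbK xi => /eqP ->.
Qed.

Lemma zero_coord i : (0 : coordring F n) i = 0.
Proof. by rewrite /GRing.zero /= ffunE. Qed.

Lemma mk_pos (S : seq (coordring F n)) (ix iy iz : 'I_(size S)) :
  ix != iy -> iy != iz -> ix != iz ->
  (forall i, (nth 0 S ix : V) i * (nth 0 S iy : V) i + (nth 0 S iy : V) i * (nth 0 S iz : V) i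
             + (nth 0 S iz : V) i * (nth 0 S ix : V) i = 0) ->
  exists pos : 'I_3 -> 'I_(size S), injective pos /\
      elem_sym 2 (fun i => nth 0 S (pos i)) = 0.
Proof.
move=> h1 h2 h3 H.
pose pos (j : 'I_3) := if j == 0 then ix else if j == 1 then iy else iz.
have p0 : pos 0 = ix by [].
have p1 : pos 1 = iy by [].
have p2 : pos 2 = iz by [].
exists pos; split.
  move=> j1 j2; rewrite /pos.
  case: j1 => [[|[|[|//]]] ?]; case: j2 => [[|[|[|//]]] ?] /=;
   move=> e; apply/val_inj => //=; move: e => /eqP; rewrite ?(negbTE h1) ?(negbTE h2) ?(negbTE h3) //;
   rewrite eq_sym ?(negbTE h1) ?(negbTE h2) ?(negbTE h3) //.
apply/ffunP => i; rewrite e2_coord zero_coord p0 p1 p2; exact: H.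
Qed.
End Main.


Section Main2.
Variables (F : finFieldType) (k n a b : nat).
Hypothesis HF : #|F| = (3 ^ k)%N.
Hypothesis k0 : (0 < k)%N.
Hypothesis ba : (b <= a)%N.
Local Notation V := {ffun 'I_n -> F}.
Local Notation L := (Lset k a b n).

Lemma egz_main : egz_prop (coordring F n) 3 2 (2 * (n.+1 * (3 * #|L|)) + 1).
Proof.
move=> S hS.
pose sv (i : 'I_(size S)) : V := nth 0 S i.
pose fib (v : V) := [set i : 'I_(size S) | sv i == v].
case: (boolP [exists v : V, 3 <= #|fib v|]%N) => [/existsP [v hv] | hfib].
  pose e (j : 'I_3) : 'I_(size S) := enum_val (widen_ord hv j).
  have ev j : sv (e j) = v by have := enum_valP (widen_ord hv j); rewrite inE => /eqP.
  have ei : injective e by move=> j1 j2 /enum_val_inj /(congr1 val) /= /val_inj.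
  exists e; split => //.
  apply/ffunP => i; rewrite e2_coord zero_coord.
  have := ev 0; have := ev 1; have := ev 2; rewrite /sv => -> -> ->.
  have -> : v i * v i + v i * v i + v i * v i = 3%:R * (v i * v i) by ring.
  by rewrite (char3 HF) mul0r.
have fib2 v : (#|fib v| <= 2)%N.
  by move: hfib; rewrite negb_exists => /forallP /(_ v); rewrite -ltnNge ltnS.
pose D := [set sv i | i in [set: 'I_(size S)]].
have hD : (size S <= 2 * #|D|)%N.
  have := card_ord (size S); rewrite -cardsT -sum1_card => <-.
  rewrite (partition_big_imset sv) /=.
  apply: (@leq_trans (\sum_(v in D) 2)%N); last by rewrite sum_nat_const mulnC.
  apply: leq_sum => v _; apply: leq_trans (fib2 v); rewrite -sum1_card.
  by apply: eq_leq; apply: eq_bigl => i; rewrite !inE.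
pose Dw (w : 'I_n.+1) := [set v in D | cls v == w].
have [w hw] : exists w, (3 * #|L| < #|Dw w|)%N.
  apply/existsP; apply: contraT; rewrite negb_exists => /forallP hall.
  have : (#|D| <= n.+1 * (3 * #|L|))%N.
    rewrite -sum1_card (partition_big (@cls F n) predT) //=.
    apply: (@leq_trans (\sum_(u < n.+1) (3 * #|L|))%N); last first.
      by rewrite sum_nat_const card_ord.
    apply: leq_sum => u _; move: (hall u); rewrite -leqNgt -sum1_card => h.
    apply: leq_trans h; apply: eq_leq; apply: eq_bigl => v; rewrite !inE.
    done.
  move: hS hD; lia.
case: (boolP [exists x in Dw w, exists y in Dw w, exists z in Dw w,
   ~~ ((x == y) && (y == z)) && [forall i, x i * y i + y i * z i + z i * x i == 0]]).
  move=> /existsP [x /andP [xD /existsP [y /andP [yD /existsP [z /andP [zD /andP [neq /forallP H]]]]]]].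
  move: xD yD zD; rewrite !inE => /andP [xD /eqP cx] /andP [yD /eqP cy] /andP [zD /eqP cz].
  have H' i := eqP (H i).
  have nxy : x != y.
    apply/eqP => exy; move: neq; rewrite exy eqxx /=; apply/negP/negPn/eqP.
    apply: (supp_lemma HF); first by rewrite cy cz.
    by move=> i; rewrite -[RHS](H' i) exy.
  have nyz : y != z.
    apply/eqP => eyz; move: neq; rewrite eyz eqxx andbT; apply/negP/negPn/eqP.
    apply/esym; apply: (supp_lemma HF); first by rewrite cz cx.
    by move=> i; rewrite -[RHS](H' i) eyz; ring.
  have nxz : x != z.
    apply/eqP => exz.
    have zy : z = y.
      apply: (supp_lemma HF); first by rewrite cz cy.
      by move=> i; rewrite -[RHS](H' i) exz; ring.
    by move: nxy; rewrite exz zy eqxx.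
  case/imsetP: xD => ix _ ex; case/imsetP: yD => iy _ ey; case/imsetP: zD => iz _ ez.
  apply: (mk_pos (ix := ix) (iy := iy) (iz := iz)).
  - by apply: contraNneq nxy => e; rewrite ex ey e.
  - by apply: contraNneq nyz => e; rewrite ey ez e.
  - by apply: contraNneq nxz => e; rewrite ex ez e.
  - by move=> i; have := H' i; rewrite ex ey ez.
move=> hno.
suff : (#|Dw w| <= 3 * #|L|)%N by rewrite leqNgt hw.
apply: (class_bound HF k0 ba).
move=> x y z xD yD zD; rewrite (PhiE HF k0).
case: (boolP ((x == y) && (y == z))) => [/andP [/eqP exy /eqP eyz]|hne].
  rewrite -eyz -exy; case: forallP => // hf; exfalso; apply: hf => i.
  have -> : x i * x i + x i * x i + x i * x i = 3%:R * (x i * x i) by ring.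
  by rewrite (char3 HF) mul0r.
case: forallP => // hf; move/negP: hno; case; apply/existsP; exists x; rewrite xD /=.
apply/existsP; exists y; rewrite yD /=; apply/existsP; exists z; rewrite zD /= hne /=.
by apply/forallP.
Qed.
End Main2.

End Part1.
Import Part1.

From Stdlib Require Import Lra.

Module Part2.
Local Open Scope R_scope.

Lemma INR_muln m n : INR (m * n)%N = (INR m * INR n).
Proof. exact: mult_INR. Qed.
Lemma INR_addn m n : INR (m + n)%N = (INR m + INR n).
Proof. exact: plus_INR. Qed.
Lemma INR_expn m n : INR (m ^ n)%N = (INR m ^ n).
Proof. elim: n => [|n IH]; first by rewrite expn0. by rewrite expnS INR_muln IH. Qed.


Lemma final_bound (k a b : nat) (c : R) : (0 < k)%N -> (0 < b)%N -> (b <= a)%N -> 1 < c ->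
  (INR a ^ 4 * INR b ^ 2) ^ k + (INR a ^ 6 + INR a ^ 3 * INR b ^ 3 + INR b ^ 6) ^ k <=
     c * (INR a ^ 4 * INR b ^ 2) ^ k + (INR b ^ 6) ^ k ->
  forall F : finFieldType, #|F| = (3 ^ k)%N ->
  exists g : nat -> R,
    Un_cv (fun n => Rdiv (g n) (INR n)) R0 /\
    exists N : nat, forall n : nat, (N <= n)%N ->
      EGZ_le (coordring F n) 3 2 (Rpower c (Rplus (INR n) (g n))).
Proof.
move=> k0 b0 ba c1 hnum0 F HF.
have hnum : INR (theta k a b) + INR ((a ^ 6 + a ^ 3 * b ^ 3 + b ^ 6) ^ k)%N <=
     c * INR (theta k a b) + INR (b ^ (6 * k))%N.
  rewrite /theta !INR_muln !INR_expn !INR_addn ?INR_muln ?INR_expn.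
  rewrite !pow_mult -Rpow_mult_distr; move: hnum0; rewrite /= ?Rmult_1_r; exact.
have lc : 0 < ln c by rewrite -ln_1; apply: ln_increasing; lra.
pose K := 8 / ln c.
have K0 : 0 < K by apply: Rdiv_lt_0_compat; lra.
exists (fun n => K * sqrt (INR n)); split.
  move=> eps heps.
  have [N0 HN0] := INR_unbounded ((K / eps) ^ 2).
  exists N0.+1 => n hn; rewrite /R_dist Rminus_0_r.
  have hn' : (N0 < n)%N by apply/leP.
  have nN : INR N0 < INR n by apply: lt_INR; apply/ltP.
  have npos : 0 < INR n by apply: lt_0_INR; apply/ltP; lia.
  set s := sqrt (INR n).
  have ss : s * s = INR n by apply: sqrt_sqrt; lra.
  have s0 : 0 < s by apply: sqrt_lt_R0.
  have M0 : 0 < K / eps by apply: Rdiv_lt_0_compat.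
  have sM : K / eps < s.
    apply: Rnot_le_lt => h.
    have : s * s <= (K / eps) * (K / eps) by apply: Rmult_le_compat; lra.
    rewrite ss; simpl in HN0; lra.
  have hK : K < eps * s.
    have := Rmult_lt_compat_l eps _ _ heps sM.
    by rewrite /Rdiv Rmult_comm Rmult_assoc Rinv_l ?Rmult_1_r; lra.
  rewrite Rabs_pos_eq; last first.
    by apply: Rmult_le_pos; [apply: Rmult_le_pos; lra | apply/Rlt_le/Rinv_0_lt_compat].
  rewrite -ss /Rdiv Rinv_mult Rmult_assoc -(Rmult_assoc s) Rinv_r; last lra.
  rewrite Rmult_1_l.
  apply: (Rmult_lt_reg_r s) => //; rewrite Rmult_assoc Rinv_l; last lra.
  lra.
exists 1%N => n hn.
set Lc := #|Lset k a b n|.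
exists (2 * (n.+1 * (3 * Lc)) + 1)%N; split; first by rewrite addn1.
split; last exact: (egz_main HF k0 ba).
have th0 : (0 < theta k a b)%N by rewrite /theta muln_gt0 !expn_gt0 b0 (leq_trans b0 ba).
have hcard := le_INR _ _ (elimT leP (@card_L k n a b)).
rewrite INR_muln !INR_expn in hcard.
have hsum := congr1 INR (@sum_rho k a b ba).
rewrite !INR_addn in hsum.
set Sr := INR (\sum_(0 <= e < 3 ^ k) rho k a b e)%N in hcard hsum.
set T := INR (theta k a b) in hcard hsum hnum.
have T0 : 0 < T by apply: lt_0_INR; apply/ltP.
have hS : 0 <= Sr <= c * T by split; [apply: pos_INR | lra].
have hL : INR Lc <= c ^ n.
  have := pow_incr _ _ n hS; rewrite Rpow_mult_distr => h.
  apply: (Rmult_le_reg_r (T ^ n)); first by apply: pow_lt.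
  rewrite -/Lc in hcard; exact: Rle_trans hcard h.
have cn1 : 1 <= c ^ n by apply: pow_R1_Rle; lra.
have n1 : 1 <= INR n by have := le_INR _ _ (elimT leP hn).
rewrite Rpower_plus Rpower_pow; last lra.
rewrite /Rpower.
have -> : K * sqrt (INR n) * ln c = 8 * sqrt (INR n).
  have hi : / ln c * ln c = 1 by apply: Rinv_l; lra.
  rewrite /K /Rdiv (Rmult_comm (8 * / ln c)) !Rmult_assoc hi. lra.
set s := sqrt (INR n).
have s0 : 0 <= s by apply: sqrt_pos.
have ss : s * s = INR n by apply: sqrt_sqrt; lra.
have he : (1 + 4 * s) * (1 + 4 * s) <= exp (8 * s).
  have -> : 8 * s = 4 * s + 4 * s by lra.
  rewrite exp_plus; have := exp_ineq1_le (4 * s) => h.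
  apply: Rmult_le_compat; lra.
have i2 : INR 2 = 2 by rewrite /=; lra.
have i3 : INR 3 = 3 by rewrite /=; lra.
have i1 : INR 1 = 1 by rewrite /=; lra.
rewrite INR_addn !INR_muln i2 i3 i1 S_INR.
have hL0 := pos_INR Lc.
have h1 : 2 * ((INR n + 1) * (3 * INR Lc)) + 1 <= (6 * INR n + 7) * c ^ n by nra.
have h2 : 6 * INR n + 7 <= (1 + 4 * s) * (1 + 4 * s) by nra.
apply: (Rle_trans _ _ _ h1); rewrite (Rmult_comm (c ^ n)).
apply: Rmult_le_compat_r; lra.
Qed.

End Part2.
Import Part2.



Theorem theorem4p13 :
  forall (k : nat), (2 <= k <= 5)%N ->
  forall (F : finFieldType), #|F| = (3 ^ k)%N ->
  exists g : nat -> R,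
    Un_cv (fun n => Rdiv (g n) (INR n)) R0 /\
    exists N : nat, forall n : nat, (N <= n)%N ->
      EGZ_le (coordring F n) 3 2 (Rpower (egz_const k) (Rplus (INR n) (g n))).
Proof.
move=> k /andP [hk2 hk5] F HF.
have : k = 2%N \/ k = 3%N \/ k = 4%N \/ k = 5%N by lia.
case=> [ek|[ek|[ek|ek]]]; subst k.
- apply: (@final_bound 2 8 7).
  + by [].
  + by [].
  + by [].
  + rewrite /egz_const; lra.
  + rewrite /egz_const !INR_IZR_INZ; simpl Z.of_nat; lra.
  + exact: HF.
- apply: (@final_bound 3 13 11) => //; first by rewrite /egz_const; lra.
  by rewrite /egz_const !INR_IZR_INZ; simpl Z.of_nat; lra.
- apply: (@final_bound 4 19 16) => //; first by rewrite /egz_const; lra.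
  by rewrite /egz_const !INR_IZR_INZ; simpl Z.of_nat; lra.
- apply: (@final_bound 5 13 11) => //; first by rewrite /egz_const; lra.
  by rewrite /egz_const !INR_IZR_INZ; simpl Z.of_nat; lra.
Qed.
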